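(* Let $(Q,\cdot)$ be a quasigroup. Then $Q$ satisfies the identity $x(y(zx))=(x(yz))x$ for all $x,y,z\in Q$ if and only if $Q$ satisfies the identity $x(y(zz))=(x(yz))z$ for all $x,y,z\in Q$.
   Context: A quasigroup is a set $Q$ with a binary operation $\cdot$ (written as juxtaposition) such that for all $a,b\in Q$ each of the equations $ax=b$ and $ya=b$ has a unique solution in $Q$. *)

(* Defs.v *)
Definition is_quasigroup {Q : Type} (mul : Q -> Q -> Q) : Prop :=
  (forall a b : Q, exists! x : Q, mul a x = b) /\
  (forall a b : Q, exists! y : Q, mul y a = b).

(* Main.v *)
Require Import Defs.
From Stdlib Require Import ClassicalEpsilon.

Lemma ex_of_uniq {A} (P : A -> Prop) : (exists! x, P x) -> exists x, P x.
Proof. intros [x [H _]]; eauto. Qed.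

Section QG.
Variable Q : Type.
Variable mul : Q -> Q -> Q.
Hypothesis HQ : is_quasigroup mul.

Definition ld (a b : Q) : Q :=
  proj1_sig (constructive_indefinite_description _
    (ex_of_uniq _ (proj1 HQ a b))).
Definition rd (b a : Q) : Q :=
  proj1_sig (constructive_indefinite_description _
    (ex_of_uniq _ (proj2 HQ a b))).

Lemma LK a b : mul a (ld a b) = b.
Proof. unfold ld. destruct constructive_indefinite_description; auto. Qed.
Lemma RK a b : mul (rd b a) a = b.
Proof. unfold rd. destruct constructive_indefinite_description; auto. Qed.
Lemma Lcan a x y : mul a x = mul a y -> x = y.
Proof.
  intro H. destruct (proj1 HQ a (mul a x)) as [u [_ Hu]].
  rewrite <- (Hu x eq_refl). apply Hu. auto.
Qed.
Lemma Rcan a x y : mul x a = mul y a -> x = y.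
Proof.
  intro H. destruct (proj2 HQ a (mul x a)) as [u [_ Hu]].
  rewrite <- (Hu x eq_refl). apply Hu. auto.
Qed.
Lemma LC a b : ld a (mul a b) = b.
Proof. apply (Lcan a). apply LK. Qed.
Lemma RC a b : rd (mul b a) a = b.
Proof. apply (Rcan a). apply RK. Qed.

Lemma AtoB :
  (forall x y z : Q, mul x (mul y (mul z x)) = mul (mul x (mul y z)) x) ->
  (forall x y z : Q, mul x (mul y (mul z z)) = mul (mul x (mul y z)) z).
Proof.
  intro A.
  set (S := fun w v => ld w (mul (mul w v) w)).
  assert (P1 : forall y z w, mul y (mul z w) = S w (mul y z)).
  { intros y z w. apply (Lcan w). unfold S. rewrite LK. apply A. }
  assert (K1 : forall a b v w, mul a (mul (ld a (mul b v)) w) = mul b (mul v w)).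
  { intros. rewrite !P1, LK. reflexivity. }
  assert (K2 : forall w x t u, ld w (mul x (mul t u)) = mul (ld w (mul x t)) u).
  { intros. apply (Lcan w). rewrite LK. symmetry. apply K1. }
  assert (SR : forall w m, S w m = mul (rd m w) (mul w w)).
  { intros. rewrite P1, RK. reflexivity. }
  assert (CM : forall w x v, S w (ld w (mul x v)) = ld w (mul x (S w v))).
  { intros. rewrite !SR, K2. f_equal.
    apply (Rcan w). rewrite RK, <- K2, RK. reflexivity. }
  assert (G : forall x v w, mul (mul x v) w = mul x (S w v)).
  { intros. rewrite <- (LK w (mul x v)).
    set (p := ld w (mul x v)).
    assert (E : mul w (S w p) = mul (mul w p) w) by (unfold S; apply LK).
    rewrite <- E. unfold p. rewrite CM, LK. reflexivity. }
  intros x y z. rewrite (P1 y z z), G. reflexivity.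
Qed.

Lemma BtoA :
  (forall x y z : Q, mul x (mul y (mul z z)) = mul (mul x (mul y z)) z) ->
  (forall x y z : Q, mul x (mul y (mul z x)) = mul (mul x (mul y z)) x).
Proof.
  intro B.
  set (U := fun z v => mul (rd v z) (mul z z)).
  assert (I : forall x v z, mul (mul x v) z = mul x (U z v)).
  { intros. unfold U. rewrite B, RK. reflexivity. }
  assert (Ap : forall z b v, U z (ld b v) = ld b (mul v z)).
  { intros. apply (Lcan b). rewrite LK, <- I, LK. reflexivity. }
  assert (Aa : forall a b v z, mul (mul a (ld b v)) z = mul a (ld b (mul v z))).
  { intros. rewrite I, Ap. reflexivity. }
  assert (Bp : forall z a e m, U z (mul a (ld e m)) = mul a (ld e (U z m))).
  { intros. unfold U at 1.
    assert (E : rd (mul a (ld e m)) z = mul a (ld e (rd m z))).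
    { apply (Rcan z). rewrite RK, Aa, RK. reflexivity. }
    rewrite E, Aa. reflexivity. }
  assert (Bb : forall z e v, U z v = mul v (ld e (U z e))).
  { intros. set (a := rd v (ld e e)).
    assert (Hv : v = mul a (ld e e)) by (unfold a; symmetry; apply RK).
    rewrite Hv at 1. rewrite Bp.
    rewrite Hv, Aa, LK. reflexivity. }
  assert (Cc : forall e w v, U (ld (mul e e) (mul e (mul e w))) v = mul v w).
  { intros. rewrite (Bb _ e). f_equal.
    apply (Lcan e). rewrite LK. apply (Lcan e).
    rewrite <- I, LK. reflexivity. }
  assert (III : forall a b v w, mul b (mul (ld b v) w) = mul a (mul (ld a v) w)).
  { intros. rewrite <- (Cc a w (ld b v)), <- (Cc a w (ld a v)), <- !I, !LK. reflexivity. }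
  assert (IV : forall a b m w, ld a (mul b (mul m w)) = mul (ld a (mul b m)) w).
  { intros. apply (Lcan a). rewrite LK, (III b a), LC. reflexivity. }
  intros x y z. rewrite I. f_equal.
  set (y' := rd (mul y z) x).
  assert (E : U x (mul y z) = mul y' (mul x x)) by reflexivity.
  rewrite E.
  rewrite <- (LK y' (mul y (mul z x))). f_equal.
  rewrite IV.
  assert (Hy : mul y z = mul y' x) by (unfold y'; symmetry; apply RK).
  rewrite Hy, LC. reflexivity.
Qed.

End QG.

Theorem mainTheorem2 (Q : Type) (mul : Q -> Q -> Q) (HQ : is_quasigroup mul) :
  (forall x y z : Q, mul x (mul y (mul z x)) = mul (mul x (mul y z)) x) <->
  (forall x y z : Q, mul x (mul y (mul z z)) = mul (mul x (mul y z)) z).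
Proof.
  split; [apply AtoB | apply BtoA]; exact HQ.
Qed.
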